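(* Let $\Phi_0$ be a finite reduced root system with simple roots $\{\alpha_i\mid i\in I_0\}$, root lattice $Q_0=\bigoplus_{i\in I_0}\mathbb{Z}\alpha_i$, $Q_{0,+}=\bigoplus_{i\in I_0}\mathbb{N}\alpha_i$, and Weyl group $W_0$. Let $P\subseteq Q_{0,+}\cup(-Q_{0,+})$ be a $W_0$-stable subset. Then every $\alpha\in P$ is $W_0$-conjugate to an integer multiple of a simple root. *)

(* Defs.v *)
From HB Require Import structures.
From mathcomp Require Import all_boot all_order all_algebra.
From mathcomp Require Import reals.
Set Implicit Arguments. Unset Strict Implicit. Unset Printing Implicit Defensive.
Import Order.TTheory GRing.Theory Num.Theory.
Local Open Scope ring_scope.

Definition dot (R : realType) (n : nat) (u v : 'rV[R]_n) : R := (u *m v^T) 0 0.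

Definition refl (R : realType) (n : nat) (a v : 'rV[R]_n) : 'rV[R]_n :=
  v - ((2 * dot v a) / dot a a) *: a.

Definition reduced_root_system (R : realType) (n : nat) (Phi : seq 'rV[R]_n) : Prop :=
  [/\ 0 \notin Phi,
      (forall v : 'rV[R]_n, exists c : 'I_(size Phi) -> R,
          v = \sum_(i < size Phi) c i *: Phi`_i),
      (forall a b, a \in Phi -> b \in Phi -> refl a b \in Phi),
      (forall a b, a \in Phi -> b \in Phi -> (2 * dot b a) / dot a a \is a Num.int) &
      (forall a (c : R), a \in Phi -> c *: a \in Phi -> c = 1 \/ c = -1)].

Definition in_Qplus (R : realType) (n : nat) (I : finType) (alpha : I -> 'rV[R]_n)
  (v : 'rV[R]_n) : Prop :=
  exists c : I -> nat, v = \sum_(i : I) (c i)%:R *: alpha i.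

Definition simple_roots (R : realType) (n : nat) (Phi : seq 'rV[R]_n)
  (I : finType) (alpha : I -> 'rV[R]_n) : Prop :=
  [/\ (forall i, alpha i \in Phi),
      (forall c : I -> R, \sum_(i : I) c i *: alpha i = 0 -> forall i, c i = 0) &
      (forall b, b \in Phi -> in_Qplus alpha b \/ in_Qplus alpha (- b))].

(* The Weyl group W_0: maps V -> V that are finite composites of the
   reflections s_a, a in Phi (the generated monoid is already a group, the
   generators being involutions). *)
Inductive weyl (R : realType) (n : nat) (Phi : seq 'rV[R]_n) : ('rV[R]_n -> 'rV[R]_n) -> Prop :=
  | weyl_id : weyl Phi id
  | weyl_step a w : a \in Phi -> weyl Phi w -> weyl Phi (refl a \o w).

(* Main.v *)
Require Import Defs.
From HB Require Import structures.
From mathcomp Require Import all_boot all_order all_algebra.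
From mathcomp Require Import reals.
From Stdlib Require Import Classical.
Import Order.TTheory GRing.Theory Num.Theory.
Local Open Scope ring_scope.

Lemma dot0l (R : realType) n (w : 'rV[R]_n) : dot 0 w = 0.
Proof. by rewrite /dot mul0mx mxE. Qed.

Lemma dotDl (R : realType) n (u v w : 'rV[R]_n) : dot (u + v) w = dot u w + dot v w.
Proof. by rewrite /dot mulmxDl mxE. Qed.

Lemma dotZl (R : realType) n (a : R) (u w : 'rV[R]_n) : dot (a *: u) w = a * dot u w.
Proof. by rewrite /dot -scalemxAl mxE. Qed.

Lemma dotNl (R : realType) n (u w : 'rV[R]_n) : dot (- u) w = - dot u w.
Proof. by rewrite -scaleN1r dotZl mulN1r. Qed.

Lemma dotC (R : realType) n (u w : 'rV[R]_n) : dot u w = dot w u.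
Proof. rewrite /dot !mxE; apply: eq_bigr => j _; by rewrite !mxE mulrC. Qed.

Lemma dot_suml (R : realType) n (J : Type) (r : seq J) (F : J -> 'rV[R]_n) w :
  dot (\sum_(i <- r) F i) w = \sum_(i <- r) dot (F i) w.
Proof.
elim: r => [|x r IH]; first by rewrite !big_nil dot0l.
by rewrite !big_cons dotDl IH.
Qed.

Lemma dot_gt0 (R : realType) n (v : 'rV[R]_n) : v != 0 -> 0 < dot v v.
Proof.
move=> vnz.
have E : dot v v = \sum_j v 0 j ^+ 2.
  rewrite /dot mxE; apply: eq_bigr => j _; by rewrite mxE expr2.
rewrite E lt_def sumr_ge0 ?andbT; last by move=> j _; exact: sqr_ge0.
apply/negP => /eqP S.
have H := psumr_eq0P (fun j _ => sqr_ge0 (v 0 j)) S.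
move/eqP: vnz; apply; apply/rowP => j; rewrite mxE.
by apply/eqP; rewrite -sqrf_eq0 H.
Qed.

Lemma refl_opp (R : realType) n (a u : 'rV[R]_n) : refl a (- u) = - refl a u.
Proof. by rewrite /refl dotNl mulrN mulNr scaleNr opprD. Qed.

Lemma weyl_opp (R : realType) n (Phi : seq 'rV[R]_n) w :
  weyl Phi w -> forall v, w (- v) = - w v.
Proof. elim=> //= a w' _ _ IH v; by rewrite IH refl_opp. Qed.

Lemma weyl_compr (R : realType) n (Phi : seq 'rV[R]_n) w a :
  weyl Phi w -> a \in Phi -> weyl Phi (w \o refl a).
Proof.
move=> hw ha; elim: hw => [|b w' hb _ IH].
  exact: (weyl_step ha (weyl_id Phi)).
exact: (weyl_step hb IH).
Qed.

Lemma uniq_coef (R : realType) n (Phi : seq 'rV[R]_n) (I : finType) (alpha : I -> 'rV[R]_n) :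
  simple_roots Phi alpha -> forall c d : I -> R,
  \sum_i c i *: alpha i = \sum_i d i *: alpha i -> forall i, c i = d i.
Proof.
case=> _ hli _ c d E i; apply/eqP; rewrite -subr_eq0; apply/eqP.
apply: (hli (fun i => c i - d i)).
under eq_bigr do rewrite scalerBl.
by rewrite sumrB E subrr.
Qed.

Lemma sum_delta (R : realType) (I : finType) (i : I) (k : R) :
  \sum_(t : I) (t == i)%:R * k = k.
Proof.
rewrite (bigD1 i) //= big1 => [|t /negbTE ->]; by rewrite ?eqxx ?mul1r ?addr0 ?mul0r.
Qed.

Lemma step (R : realType) n (Phi : seq 'rV[R]_n) (I : finType) (alpha : I -> 'rV[R]_n)
  (P : 'rV[R]_n -> Prop) (i0 : I) :
  reduced_root_system Phi -> simple_roots Phi alpha ->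
  (forall v, P v -> in_Qplus alpha v \/ in_Qplus alpha (- v)) ->
  (forall w, weyl Phi w -> forall v, P v -> P (w v)) ->
  forall c : I -> nat, P (\sum_i (c i)%:R *: alpha i) ->
  (exists i, forall j, j != i -> c j = 0%N) \/
  exists a (e : I -> nat), [/\ a \in Phi, refl a (\sum_i (c i)%:R *: alpha i)
      = \sum_i (e i)%:R *: alpha i & (\sum_i e i < \sum_i c i)%N].
Proof.
move=> RS SR hP hW c Pv.
have U := @uniq_coef _ _ _ _ _ SR.
case: RS => h0 hspan hrefl hint hred.
case: SR => hin hli hQ.
case: (classic (exists i, forall j, j != i -> c j = 0%N)) => [hA|hB]; [by left|right].
set v := \sum_i (c i)%:R *: alpha i in Pv *.
have vnz : v != 0.
  apply/eqP => v0; apply: hB; exists i0 => j _.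
  have := U (fun i => (c i)%:R) (fun _ => 0) _ j.
  rewrite -/v v0 big1 => [/(_ erefl)/eqP|]; last by move=> t _; rewrite scale0r.
  by rewrite pnatr_eq0 => /eqP.
have vv := @dot_gt0 _ _ _ vnz.
have Ev : forall u, dot v u = \sum_i (c i)%:R * dot (alpha i) u.
  by move=> u; rewrite /v dot_suml; apply: eq_bigr => i _; rewrite dotZl.
have [i hi] : exists i, 0 < (c i)%:R * dot v (alpha i).
  apply: NNPP => hn.
  have : dot v v <= 0.
    rewrite Ev sumr_le0 // => i _; rewrite dotC leNgt; apply/negP => h.
    by apply: hn; exists i.
  by rewrite leNgt vv.
have ha := hin i.
set a := alpha i in hi ha *.
have ha0 : a != 0 by apply/eqP => a0; move: h0; rewrite -a0 ha.
have daa := @dot_gt0 _ _ _ ha0.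
have dva : 0 < dot v a.
  rewrite ltNge; apply/negP => h; move: hi; by rewrite ltNge mulr_ge0_le0 ?ler0n.
set k := 2 * dot v a / dot a a.
have kpos : 0 < k by rewrite divr_gt0 // mulr_gt0.
have kint : k \is a Num.int.
  have -> : k = \sum_j (c j)%:R * (2 * dot (alpha j) a / dot a a).
    rewrite /k Ev mulr_sumr mulr_suml; apply: eq_bigr => j _.
    idtac.
by rewrite !mulrA [2 * _]mulrC.

  apply: rpred_sum => j _; apply: rpredM; first exact: rpred_nat.
  exact: hint.
have [K EK] : exists K : nat, k = K%:R by apply/natrP; rewrite -intrEge0 // ltW.
have K1 : (0 < K)%N by rewrite -(ltr0n R) -EK.
have Ed : \sum_t ((t == i)%:R * k) *: alpha t = k *: a.
  rewrite (bigD1 i) //= eqxx mul1r big1 ?addr0 // => t /negbTE ->.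
  by rewrite mul0r scale0r.
have Erefl : refl a v = \sum_t ((c t)%:R - (t == i)%:R * k) *: alpha t.
  under eq_bigr do rewrite scalerBl.
  by rewrite sumrB Ed.
have [j [hji hcj]] : exists j, j != i /\ c j <> 0%N.
  apply: NNPP => hn; apply: hB; exists i => j hj; apply: NNPP => hc; apply: hn.
  by exists j.
have Pr : P (refl a v) := hW _ (weyl_step ha (weyl_id Phi)) v Pv.
case: (hP _ Pr) => [[e Ee]|[e Ee]].
  exists a, e; split => //.
  have Ec := U _ _ (etrans (esym Erefl) Ee).
  have : ((\sum_t e t)%N + K)%:R = (\sum_t c t)%:R :> R.
    rewrite natrD !natr_sum -EK.
    under eq_bigr => t _ do rewrite -Ec.
    by rewrite sumrB sum_delta subrK.
  move/eqP; rewrite eqr_nat => /eqP <-.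
  by rewrite -{1}(addn0 (\sum_t e t)) ltn_add2l.
exfalso.
have E2 : refl a v = \sum_t (- (e t)%:R) *: alpha t.
  by rewrite -[LHS]opprK Ee -sumrN; apply: eq_bigr => t _; rewrite scaleNr.
have Ec := U _ _ (etrans (esym Erefl) E2).
move: (Ec j); rewrite (negbTE hji) mul0r subr0 => /eqP.
rewrite -subr_eq0 opprK -natrD pnatr_eq0 addn_eq0 => /andP[/eqP ? _].
by [].
Qed.

Lemma main_pos (R : realType) n (Phi : seq 'rV[R]_n) (I : finType) (alpha : I -> 'rV[R]_n)
  (P : 'rV[R]_n -> Prop) (i0 : I) :
  reduced_root_system Phi -> simple_roots Phi alpha ->
  (forall v, P v -> in_Qplus alpha v \/ in_Qplus alpha (- v)) ->
  (forall w, weyl Phi w -> forall v, P v -> P (w v)) ->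
  forall h (c : I -> nat), (\sum_i c i <= h)%N -> P (\sum_i (c i)%:R *: alpha i) ->
  exists w, weyl Phi w /\ exists (i : I) (m : int),
    w (\sum_i (c i)%:R *: alpha i) = m%:~R *: alpha i.
Proof.
move=> RS SR hP hW h; elim: h => [|h IH] c hc Pv;
  case: (@step _ _ _ _ _ _ i0 RS SR hP hW c Pv) => [[i hA]|[a [e [ha Er He]]]].
- exists id; split; first exact: weyl_id.
  exists i, (c i)%:Z; rewrite /= (bigD1 i) //= big1 ?addr0 // => j hj.
  by rewrite hA // scale0r.
- by move: (leq_trans He hc); rewrite ltn0.
- exists id; split; first exact: weyl_id.
  exists i, (c i)%:Z; rewrite /= (bigD1 i) //= big1 ?addr0 // => j hj.
  by rewrite hA // scale0r.
- have Pe : P (\sum_i (e i)%:R *: alpha i).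
    rewrite -Er; exact: (hW _ (weyl_step ha (weyl_id Phi))).
  have [w [hw [i [m Em]]]] := IH e (leq_trans He hc) Pe.
  exists (w \o refl a); split; first exact: (@weyl_compr _ _ _ _ _ hw ha).
  by exists i, m; rewrite /= Er.
Qed.

Theorem lemma8p19 (R : realType) (n : nat) (Phi : seq 'rV[R]_n)
  (I : finType) (alpha : I -> 'rV[R]_n) (P : 'rV[R]_n -> Prop) :
  (0 < n)%N ->
  reduced_root_system Phi ->
  simple_roots Phi alpha ->
  (forall v, P v -> in_Qplus alpha v \/ in_Qplus alpha (- v)) ->
  (forall w, weyl Phi w -> forall v, P v -> P (w v)) ->
  forall a, P a ->
    exists w, weyl Phi w /\ exists (i : I) (m : int), w a = m%:~R *: alpha i.
Proof.
move=> hn RS SR hP hW a Pa.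
have [i0 _|hI] := pickP (fun _ : I => true); last first.
  exfalso.
  case: RS => h0 hspan _ _ _; case: SR => _ _ hQ.
  have [c Ec] := hspan (const_mx 1).
  have sz : (0 < size Phi)%N.
    rewrite lt0n; apply/negP => /eqP s0.
    move: Ec; rewrite big1 => [|i _]; last by have := ltn_ord i; rewrite {2}s0.
    move=> /matrixP /(_ 0 (Ordinal hn)).
    by rewrite !mxE => /eqP; rewrite oner_eq0.
  have hb := mem_nth 0 sz.
  have Z : forall F : I -> 'rV[R]_n, \sum_i F i = 0.
    by move=> F; rewrite big1 // => i; have := hI i.
  case: (hQ _ hb) => [[e Ee]|[e Ee]].
    by move: h0; rewrite Ee Z in hb; rewrite hb.
  by move: h0; rewrite -[Phi`_0]opprK Ee Z oppr0 in hb; rewrite hb.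
case: (hP _ Pa) => [[c Ec]|[c Ec]].
  rewrite Ec; apply: (@main_pos _ _ _ _ _ _ i0 RS SR hP hW _ c (leqnn _)).
  by rewrite -Ec.
pose P' := fun v => P (- v).
have hP' : forall v, P' v -> in_Qplus alpha v \/ in_Qplus alpha (- v).
  by move=> v /hP [] ?; [right|left; rewrite -[v]opprK].
have hW' : forall w, weyl Phi w -> forall v, P' v -> P' (w v).
  by move=> w hw v hv; rewrite /P' -(@weyl_opp _ _ _ _ hw); apply: hW.
have P'c : P' (\sum_i (c i)%:R *: alpha i) by rewrite /P' -Ec opprK.
have [w [hw [i [m Em]]]] := @main_pos _ _ _ _ _ _ i0 RS SR hP' hW' _ c (leqnn _) P'c.
exists w; split => //; exists i, (- m).
by rewrite -[a]opprK Ec (@weyl_opp _ _ _ _ hw) Em intrN scaleNr.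
Qed.
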